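(* Consider $n>1$ agents over a time-varying directed graph $\mathbb N(t)=(\mathcal N,\mathcal E(t))$ running the push-sum update $v_i(1)=1$, $v_i(t+1)=l_i(t)v_i(t)+\sum_{j\in\mathcal N_i^{\mathrm{in}}(t)}l_j(t)v_j(t)$, where $l_i(t)=1/(1+o_i(t))$, $o_i(t)$ is the out-degree of $i$ and $\mathcal N_i^{\mathrm{in}}(t)$ its set of in-neighbors at time $t$. Let $\mathcal N_i^+(t)=\mathcal N_i^{\mathrm{in}}(t)\cup\{i\}$ and define the matrix $S(t)$ by $s_{ij}(t)=\frac{l_j(t)v_j(t)}{\sum_{k\in\mathcal N_i^+(t)}l_k(t)v_k(t)}$ for $j\in\mathcal N_i^+(t)$ and $s_{ij}(t)=0$ otherwise. Assume that for every $t$ there is a symmetric stochastic matrix with positive diagonal whose off-diagonal entries vanish outside $\mathcal E(t)$, and that $\{\mathbb N(t)\}$ is repeatedly jointly strongly connected. Then the system $h(t+1)=S(t)h(t)$ is uniformly exponentially consensus stable: there exist a finite constant $\gamma>0$ and $0\le\lambda<1$ such that for any $t_0$ and any $h(t_0)$, $|h(t)|_\infty\le\gamma\lambda^{t-t_0}|h(t_0)|_\infty$ for all $t\ge t_0$.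
   Context: For $x\in\mathbb R^n$, $|x|_\infty=\frac12(\max_i x_i-\min_j x_j)$. Repeatedly jointly strongly connected: there is an integer $r\ge1$ such that for each $k\ge0$ the union of $\mathbb N(rk+1),\dots,\mathbb N(r(k+1))$ (edge sets united) is strongly connected. *)

(* Defs.v *)
From mathcomp Require Import all_boot all_order all_algebra.
From mathcomp Require Import reals.
Set Implicit Arguments. Unset Strict Implicit. Unset Printing Implicit Defensive.
Import Order.TTheory GRing.Theory Num.Theory.
Local Open Scope ring_scope.

Section PushSum.
Variables (R : realType) (n : nat).
(* E t j i  means the directed edge (j, i), i.e. j -> i, is in E(t). *)
Variable E : nat -> rel 'I_n.

Definition in_nbrs (t : nat) (i : 'I_n) : {set 'I_n} :=
  [set j | (j != i) && E t j i].
Definition in_nbrs_plus (t : nat) (i : 'I_n) : {set 'I_n} :=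
  i |: in_nbrs t i.
Definition out_deg (t : nat) (i : 'I_n) : nat :=
  #|[set j | (j != i) && E t i j]|.
Definition lw (t : nat) (i : 'I_n) : R := (1 + (out_deg t i)%:R)^-1.

Definition ps_step (t : nat) (v : 'I_n -> R) : 'I_n -> R :=
  fun i => lw t i * v i + \sum_(j in in_nbrs t i) lw t j * v j.

(* push-sum weights; time starts at 1: v(1) = 1, v(t+1) = step t (v t).
   (v 0 is set to 1 as well and is never used.) *)
Fixpoint ps_v (t : nat) : 'I_n -> R :=
  match t with
  | 0 => fun _ => 1
  | t'.+1 => if t' is 0 then (fun _ => 1) else ps_step t' (ps_v t')
  end.

Definition Smx (t : nat) : 'M[R]_n :=
  \matrix_(i, j)
    (if j \in in_nbrs_plus t i then
       lw t j * ps_v t j / \sum_(k in in_nbrs_plus t i) lw t k * ps_v t k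
     else 0).
End PushSum.

(* |x|_inf = (max_i x_i - min_j x_j)/2, written as max_{i,j}(x_i - x_j)/2 *)
Definition seminf (R : realType) (n : nat) (x : 'I_n -> R) : R :=
  (\big[Num.max/0]_(i < n) \big[Num.max/0]_(j < n) (x i - x j)) / 2.

Definition compatible_sym_stoch (R : realType) (n : nat) (Et : rel 'I_n) :=
  exists A : 'M[R]_n,
    [/\ A^T = A,
        forall i j, 0 <= A i j,
        forall i, \sum_j A i j = 1,
        forall i, 0 < A i i
      & forall i j, i != j -> ~~ Et i j -> A i j = 0].

(* repeatedly jointly strongly connected (time starts at 1) *)
Definition rep_jointly_sc (n : nat) (E : nat -> rel 'I_n) :=
  exists r : nat, (1 <= r)%N /\
    forall k : nat,
      let U := fun x y : 'I_n => [exists s : 'I_r, E (r * k + s + 1)%N x y] in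
      forall x y : 'I_n, connect U x y.

(* Main.v *)
Require Import Defs.
From mathcomp Require Import all_boot all_order all_algebra.
From mathcomp Require Import reals.
From mathcomp Require Import zify lra.
Import Order.TTheory GRing.Theory Num.Theory.
Local Open Scope ring_scope.
Set Implicit Arguments. Unset Strict Implicit. Unset Printing Implicit Defensive.

Section Gen.
Variables (R : realType) (n : nat).

Fixpoint prodm (A : nat -> 'I_n -> 'I_n -> R) (t0 k : nat) : 'I_n -> 'I_n -> R :=
  match k with
  | 0 => fun i j => (i == j)%:R
  | k'.+1 => fun i j => \sum_l A (t0 + k')%N i l * prodm A t0 k' l j
  end.

Lemma sum_delta (i : 'I_n) (x : 'I_n -> R) : \sum_j (i == j)%:R * x j = x i.
Proof.
rewrite (bigD1 i) //= eqxx mul1r big1 ?addr0 // => j ji.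
by rewrite eq_sym (negbTE ji) mul0r.
Qed.

Lemma prodm_evol (A : nat -> 'I_n -> 'I_n -> R) (x : nat -> 'I_n -> R) t0 :
  (forall t, (t0 <= t)%N -> forall i, x t.+1 i = \sum_j A t i j * x t j) ->
  forall k i, x (t0 + k)%N i = \sum_j prodm A t0 k i j * x t0 j.
Proof.
move=> H; elim=> [|k IH] i /=.
  by rewrite addn0 sum_delta.
rewrite addnS H ?leq_addr //.
rewrite (eq_bigr (fun l => \sum_j A (t0 + k)%N i l * (prodm A t0 k l j * x t0 j))); last by move=> l _; rewrite IH mulr_sumr.
rewrite exchange_big /=; apply: eq_bigr => j _; rewrite mulr_suml.
by apply: eq_bigr => l _; rewrite mulrA.
Qed.

Lemma prodm_ge0 (A : nat -> 'I_n -> 'I_n -> R) t0 :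
  (forall t, (t0 <= t)%N -> forall i j, 0 <= A t i j) ->
  forall k i j, 0 <= prodm A t0 k i j.
Proof.
move=> H; elim=> [|k IH] i j /=; first by rewrite ler0n.
by apply: sumr_ge0 => l _; apply: mulr_ge0 => //; apply: H; rewrite leq_addr.
Qed.

Lemma prodm_row (A : nat -> 'I_n -> 'I_n -> R) t0 :
  (forall t, (t0 <= t)%N -> forall i, \sum_j A t i j = 1) ->
  forall k i, \sum_j prodm A t0 k i j = 1.
Proof.
move=> H; elim=> [|k IH] i /=.
  by rewrite -[RHS](sum_delta i (fun _ => 1)); apply: eq_bigr => j _; rewrite mulr1.
rewrite exchange_big /=.
under eq_bigr => l _ do rewrite -mulr_sumr IH mulr1.
by apply: H; rewrite leq_addr.
Qed.

Variable E : nat -> rel 'I_n.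

Fixpoint reach (t0 k : nat) (j : 'I_n) : {set 'I_n} :=
  match k with
  | 0 => [set j]
  | k'.+1 => [set i | [exists l in reach t0 k' j, (l == i) || E (t0 + k')%N l i]]
  end.

Lemma reach_step t0 k j l i : l \in reach t0 k j -> E (t0 + k)%N l i ->
  i \in reach t0 k.+1 j.
Proof. by move=> lr El; rewrite /= inE; apply/existsP; exists l; rewrite lr El orbT. Qed.

Lemma reach_S t0 k j : reach t0 k j \subset reach t0 k.+1 j.
Proof. by apply/subsetP => i ir; rewrite /= inE; apply/existsP; exists i; rewrite ir eqxx. Qed.

Lemma reach_mono t0 k m j : (k <= m)%N -> reach t0 k j \subset reach t0 m j.
Proof.
elim: m => [|m IH]; first by rewrite leqn0 => /eqP ->.
rewrite leq_eqVlt => /orP [/eqP -> // | ].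
rewrite ltnS => /IH H; exact: subset_trans H (reach_S _ _ _).
Qed.

Lemma reach_j t0 k j : j \in reach t0 k j.
Proof. by apply: (subsetP (reach_mono t0 j (leq0n k))); rewrite /= inE. Qed.

Lemma prodm_lb (A : nat -> 'I_n -> 'I_n -> R) t0 (eps : R) : 0 <= eps ->
  (forall t, (t0 <= t)%N -> forall i j, 0 <= A t i j) ->
  (forall t, (t0 <= t)%N -> forall i, eps <= A t i i) ->
  (forall t, (t0 <= t)%N -> forall i l, l != i -> E t l i -> eps <= A t i l) ->
  forall k i j, i \in reach t0 k j -> eps ^+ k <= prodm A t0 k i j.
Proof.
move=> e0 H0 Hd Ho; elim=> [|k IH] i j /=.
  by rewrite inE => /eqP ->; rewrite eqxx expr0.
rewrite inE => /existsP [l /andP [lr Hl]].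
rewrite (bigD1 l) //=; apply: le_trans (_ : A (t0 + k)%N i l * prodm A t0 k l j <= _).
  rewrite exprS; apply: ler_pM => //; first exact: exprn_ge0.
    case: (eqVneq l i) Hl => [-> _| li /= El]; first by apply: Hd; rewrite leq_addr.
    by apply: Ho => //; rewrite leq_addr.
  exact: IH.
rewrite lerDl; apply: sumr_ge0 => m _; apply: mulr_ge0; last exact: prodm_ge0.
by apply: H0; rewrite leq_addr.
Qed.


Lemma cross (U : rel 'I_n) (S : {set 'I_n}) x y :
  connect U x y -> x \in S -> y \notin S ->
  exists u w, [/\ u \in S, w \notin S & U u w].
Proof.
move=> /connectP [p]; elim: p x => [|z p IH] x /=.
  by move=> _ -> ->.
move=> /andP [Uxz pp] ylast xS yS.
case: (boolP (z \in S)) => zS; first exact: IH pp ylast zS yS.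
by exists x, z.
Qed.

Variable r : nat.
Hypothesis Hr : (1 <= r)%N.
Hypothesis HE : forall k x y,
  connect (fun x y : 'I_n => [exists s : 'I_r, E (r * k + s + 1) x y]) x y.

Lemma reach_window t0 k j a : (r * k + 1 = t0 + a)%N ->
  reach t0 a j != setT -> (#|reach t0 a j| < #|reach t0 (a + r) j|)%N.
Proof.
move=> ek nT.
have [y yn] : exists y, y \notin reach t0 a j.
  case: (pickP (fun y => y \notin reach t0 a j)) => [y Hy|H]; first by exists y.
  by move: nT; rewrite eqEsubset subsetT /=; case/negP; apply/subsetP => z _; have := H z; rewrite /= => /negbFE.
have [u [w [uS wS /existsP [s Es]]]] := cross (HE k j y) (reach_j t0 a j) yn.
apply: proper_card; apply/properP; split; first by apply: reach_mono; rewrite leq_addr.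
exists w => //.
apply: (subsetP (reach_mono t0 j (_ : (a + s).+1 <= a + r)%N)); first by rewrite ltn_add2l.
apply: (reach_step (l := u)).
  by apply: (subsetP (reach_mono t0 j (leq_addr s a))).
by rewrite (_ : (t0 + (a + s) = r * k + s + 1)%N) //; lia.
Qed.

Lemma reach_full t0 j : (1 <= t0)%N -> (0 < n)%N -> reach t0 (r * n) j = setT.
Proof.
move=> t1 n0.
set q := ((t0 - 1) %/ r)%N.
have dq := divn_eq (t0 - 1) r; have mq := ltn_pmod (t0 - 1) Hr.
set a0 := (r * (q + 1) + 1 - t0)%N.
have ea0 : (r * (q + 1) + 1 = t0 + a0)%N by rewrite /a0 /q; lia.
have claim : forall m, reach t0 (a0 + m * r) j = setT \/ (m < #|reach t0 (a0 + m * r) j|)%N.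
  elim=> [|m IH].
    by right; rewrite mul0n addn0 card_gt0; apply/set0Pn; exists j; apply: reach_j.
  have mono : reach t0 (a0 + m * r) j \subset reach t0 (a0 + m.+1 * r) j.
    by apply: reach_mono; rewrite leq_add2l leq_mul2r leqnSn orbT.
  case: IH => [HT|Hc].
    left; apply/eqP; rewrite eqEsubset subsetT /=; by rewrite -HT.
  case: (eqVneq (reach t0 (a0 + m * r) j) setT) => [HT|nT].
    left; apply/eqP; rewrite eqEsubset subsetT /=; by rewrite -HT.
  right; have := reach_window (k := (q + 1 + m)%N) (_ : _ = t0 + (a0 + m * r))%N nT.
  rewrite (_ : (a0 + m * r + r = a0 + m.+1 * r)%N); last by rewrite mulSn; lia.
  move=> H; apply: leq_ltn_trans Hc (H _).
  by rewrite mulnDr (mulnC r m); lia.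
apply/eqP; rewrite eqEsubset subsetT /=.
have le : (a0 + n.-1 * r <= r * n)%N.
  have : (a0 <= r)%N by rewrite /a0; lia.
  move=> H; rewrite mulnC; case: n n0 => // n' _ /=; rewrite mulnS; lia.
apply: subset_trans (reach_mono t0 j le).
case: (claim n.-1) => [-> // | Hc].
have : #|reach t0 (a0 + n.-1 * r) j| = #|[set: 'I_n]|.
  apply/eqP; rewrite cardsT eqn_leq max_card /= card_ord; apply: leq_trans Hc; rewrite prednK //.
by move=> Hc2; have /eqP -> : reach t0 (a0 + n.-1 * r) j == setT by rewrite eqEcard subsetT Hc2 leqnn.
Qed.

End Gen.


Section Semi.
Variables (R : realType) (n : nat).

Lemma le_bmax (F : 'I_n -> R) i : F i <= \big[Num.max/0]_(i < n) F i.
Proof. by rewrite (bigD1 i) //= le_max lexx. Qed.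

Lemma bmax_le (F : 'I_n -> R) c : 0 <= c -> (forall i, F i <= c) ->
  \big[Num.max/0]_(i < n) F i <= c.
Proof.
move=> c0 H; elim/big_ind: _ => // u v Hu Hv.
by rewrite ge_max Hu Hv.
Qed.

Lemma seminf_ge (x : 'I_n -> R) i j : (x i - x j) / 2 <= seminf x.
Proof.
rewrite /seminf ler_pM2r ?invr_gt0 ?ltr0n //.
exact: le_trans (le_bmax (fun j => x i - x j) j) (le_bmax (fun i => \big[Num.max/0]_(j < n) (x i - x j)) i).
Qed.

Lemma seminf_ge0 (x : 'I_n -> R) : (0 < n)%N -> 0 <= seminf x.
Proof.
move=> n0; have := seminf_ge x (Ordinal n0) (Ordinal n0).
by rewrite subrr mul0r.
Qed.

Lemma seminf_le (x : 'I_n -> R) c : 0 <= c -> (forall i j, x i - x j <= c) ->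
  seminf x <= c / 2.
Proof.
move=> c0 H; rewrite /seminf ler_pM2r ?invr_gt0 ?ltr0n //.
by apply: bmax_le => // i; apply: bmax_le => // j.
Qed.

Lemma term_le_sum (F : 'I_n -> R) k : (forall l, 0 <= F l) -> F k <= \sum_l F l.
Proof. by move=> H; rewrite (bigD1 k) //= lerDl sumr_ge0. Qed.


Lemma contract (Q : 'I_n -> 'I_n -> R) (etaS : R) (x : 'I_n -> R) :
  (0 < n)%N -> 0 <= etaS -> 2 * etaS <= 1 ->
  (forall i j, 0 <= Q i j) -> (forall i, \sum_j Q i j = 1) ->
  (forall i j, etaS <= Q i j) ->
  seminf (fun i => \sum_j Q i j * x j) <= (1 - 2 * etaS) * seminf x.
Proof.
move=> n0 e0 e1 Q0 Q1 Qe.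
pose i0 := Ordinal n0.
case: (arg_minP x (P := xpredT) (i0 := i0) isT) => a _ Ha.
case: (arg_maxP x (P := xpredT) (i0 := i0) isT) => b _ Hb.
have d2 : x b - x a <= 2 * seminf x.
  by rewrite -ler_pdivrMl ?ltr0n // mulrC; exact: seminf_ge.
have d0 : 0 <= x b - x a by rewrite subr_ge0; apply: Ha.
have up i : etaS * (x b - x a) <= x b - \sum_j Q i j * x j.
  have -> : x b - \sum_j Q i j * x j = \sum_j Q i j * (x b - x j).
    rewrite [RHS](eq_bigr (fun j => Q i j * x b - Q i j * x j)); last by move=> j _; rewrite mulrBr.
    by rewrite sumrB -mulr_suml Q1 mul1r.
  apply: le_trans (_ : Q i a * (x b - x a) <= _); first by apply: ler_wpM2r.
  apply: (@term_le_sum (fun j => Q i j * (x b - x j)) a).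
  by move=> l; apply: mulr_ge0 => //; rewrite subr_ge0; apply: Hb.
have lo j : etaS * (x b - x a) <= \sum_k Q j k * x k - x a.
  have -> : \sum_k Q j k * x k - x a = \sum_k Q j k * (x k - x a).
    rewrite [RHS](eq_bigr (fun k => Q j k * x k - Q j k * x a)); last by move=> k _; rewrite mulrBr.
    by rewrite sumrB -mulr_suml Q1 mul1r.
  apply: le_trans (_ : Q j b * (x b - x a) <= _); first by apply: ler_wpM2r.
  apply: (@term_le_sum (fun k => Q j k * (x k - x a)) b).
  by move=> l; apply: mulr_ge0 => //; rewrite subr_ge0; apply: Ha.
have c0 : 0 <= 1 - 2 * etaS by rewrite subr_ge0.
apply: le_trans (seminf_le (c := (1 - 2 * etaS) * (x b - x a)) _ _) _.
- exact: mulr_ge0.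
- move=> i j; have := up i; have := lo j; lra.
- rewrite -mulrA ler_wpM2l //; rewrite ler_pdivrMr ?ltr0n //; lra.
Qed.

End Semi.


Section PS.
Variables (R : realType) (n : nat) (E : nat -> rel 'I_n).
Hypothesis n1 : (1 < n)%N.

Let n0 : (0 < n)%N. Proof. exact: ltnW. Qed.

Definition Mps t (i j : 'I_n) : R :=
  if j \in in_nbrs_plus E t i then lw R E t j else 0.

Lemma outdeg_lt t i : (out_deg E t i < n)%N.
Proof.
have H : [set j | (j != i) && E t i j] \subset [set~ i].
  by apply/subsetP => j; rewrite !inE => /andP [].
have := subset_leq_card H; rewrite cardsC1 card_ord /out_deg => le.
by apply: leq_ltn_trans le _; rewrite prednK.
Qed.

Lemma lwE t i : lw R E t i = ((out_deg E t i).+1%:R)^-1.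
Proof. by rewrite /lw addrC natr1. Qed.

Lemma lw_gt0 t i : 0 < lw R E t i.
Proof. by rewrite lwE invr_gt0 ltr0n. Qed.

Lemma lw_ge t i : n%:R^-1 <= lw R E t i.
Proof.
rewrite lwE lef_pV2 ?posrE ?ltr0n // ler_nat; exact: outdeg_lt.
Qed.

Lemma lw_le1 t i : lw R E t i <= 1.
Proof. by rewrite lwE invf_le1 ?ltr0n // ler1n. Qed.

Lemma Mps_ge0 t i j : 0 <= Mps t i j.
Proof. by rewrite /Mps; case: ifP => // _; apply: ltW; apply: lw_gt0. Qed.

Lemma sum_plus t (v : 'I_n -> R) i :
  \sum_(k in in_nbrs_plus E t i) lw R E t k * v k = ps_step E t v i.
Proof. by rewrite /in_nbrs_plus big_setU1 //= /in_nbrs inE eqxx. Qed.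

Lemma ps_step_M t v i : ps_step E t v i = \sum_j Mps t i j * v j.
Proof.
rewrite -sum_plus big_mkcond /=; apply: eq_bigr => j _.
by rewrite /Mps; case: ifP => _; rewrite ?mul0r.
Qed.

Lemma Mps_col t j : \sum_i Mps t i j = 1.
Proof.
set O := [set i | (i != j) && E t j i].
have -> : \sum_i Mps t i j = \sum_(i in j |: O) lw R E t j.
  rewrite [RHS]big_mkcond /=; apply: eq_bigr => i _.
  by rewrite /Mps /in_nbrs_plus /in_nbrs !inE (eq_sym i j).
rewrite sumr_const cardsU1 /O inE eqxx /= add1n lwE -/(out_deg E t j).
by rewrite -[LHS]mulr_natr mulVf // pnatr_eq0.
Qed.

Lemma ps_vS t : (1 <= t)%N -> ps_v R E t.+1 = ps_step E t (ps_v R E t).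
Proof. by case: t. Qed.

Lemma ps_vS_M t : (1 <= t)%N -> forall i,
  ps_v R E t.+1 i = \sum_j Mps t i j * ps_v R E t j.
Proof. by move=> t1 i; rewrite ps_vS // ps_step_M. Qed.

Lemma v_pos t i : (1 <= t)%N -> 0 < ps_v R E t i.
Proof.
elim: t i => // t IH i _.
case: (posnP t) => [-> | t0]; first by rewrite /= ltr01.
rewrite ps_vS // /ps_step.
apply: (@lt_le_trans _ _ (lw R E t i * ps_v R E t i)).
  by apply: mulr_gt0; [apply: lw_gt0 | apply: IH].
rewrite lerDl; apply: sumr_ge0 => j _; apply: mulr_ge0.
  exact: ltW (lw_gt0 _ _).
exact: ltW (IH _ t0).
Qed.

Lemma v_sum t : (1 <= t)%N -> \sum_i ps_v R E t i = n%:R.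
Proof.
elim: t => // t IH _.
case: (posnP t) => [-> | t0]; first by rewrite /= sumr_const card_ord.
under eq_bigr => i _ do rewrite ps_vS_M //.
rewrite exchange_big /=.
under eq_bigr => j _ do rewrite -mulr_suml Mps_col mul1r.
exact: IH.
Qed.

Lemma v_le t i : (1 <= t)%N -> ps_v R E t i <= n%:R.
Proof.
move=> t1; rewrite -(v_sum t1).
apply: (@term_le_sum R n (ps_v R E t) i) => j; exact: ltW (v_pos _ t1).
Qed.

Lemma v_ge1 t : (1 <= t)%N -> exists j, 1 <= ps_v R E t j.
Proof.
move=> t1.
case: (arg_maxP (ps_v R E t) (P := xpredT) (i0 := Ordinal n0) isT) => b _ Hb.
exists b.
have : n%:R <= ps_v R E t b *+ n.
  have -> : ps_v R E t b *+ n = \sum_(i : 'I_n) ps_v R E t b by rewrite sumr_const card_ord.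
  rewrite -(v_sum t1).
  by apply: ler_sum => i _; apply: Hb.
by move=> H; rewrite -(@ler_pM2r _ n%:R) ?ltr0n // mul1r mulr_natr.
Qed.

Lemma v_lb_small t i : (1 <= t)%N -> n%:R^-1 ^+ t.-1 <= ps_v R E t i.
Proof.
elim: t i => // t IH i _.
case: (posnP t) => [-> | t0]; first by rewrite /= expr0.
rewrite ps_vS // /ps_step.
apply: (@le_trans _ _ (lw R E t i * ps_v R E t i)); last first.
  rewrite lerDl; apply: sumr_ge0 => j _; apply: mulr_ge0.
    exact: ltW (lw_gt0 _ _).
  exact: ltW (v_pos _ t0).
have e : n%:R^-1 ^+ t = n%:R^-1 * n%:R^-1 ^+ t.-1 :> R by rewrite -exprS prednK.
rewrite /= e; apply: ler_pM.
- by rewrite invr_ge0 ler0n.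
- by apply: exprn_ge0; rewrite invr_ge0 ler0n.
- exact: lw_ge.
- by apply: IH.
Qed.

Variable r : nat.
Hypothesis Hr : (1 <= r)%N.
Hypothesis HE : forall k x y,
  connect (fun x y : 'I_n => [exists s : 'I_r, E (r * k + s + 1) x y]) x y.

Let L := (r * n)%N.

Lemma L_ge1 : (1 <= L)%N.
Proof. by rewrite /L muln_gt0 Hr n0. Qed.

Lemma ninv_ge0 : 0 <= n%:R^-1 :> R.
Proof. by rewrite invr_ge0 ler0n. Qed.

Lemma ninv_le1 : n%:R^-1 <= 1 :> R.
Proof. by rewrite invf_le1 ?ltr0n // ler1n. Qed.

Lemma v_lb_big t0 i : (1 <= t0)%N -> n%:R^-1 ^+ L <= ps_v R E (t0 + L) i.
Proof.
move=> t1.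
have ev := prodm_evol (A := Mps) (x := ps_v R E) (fun t Ht => ps_vS_M (leq_trans t1 Ht)).
rewrite ev.
have [b Hb] := v_ge1 t1.
apply: (@le_trans _ _ (prodm Mps t0 L i b * ps_v R E t0 b)); last first.
  apply: (@term_le_sum R n (fun j => prodm Mps t0 L i j * ps_v R E t0 j) b) => j.
  apply: mulr_ge0; first by apply: prodm_ge0 => t _ i1 j1; apply: Mps_ge0.
  exact: ltW (v_pos _ t1).
rewrite -[X in X <= _]mulr1; apply: ler_pM => //.
- by apply: exprn_ge0; exact: ninv_ge0.
- apply: (prodm_lb (E := E)) => //.
  + exact: ninv_ge0.
  + by move=> t _ i' j'; apply: Mps_ge0.
  + by move=> t _ i'; rewrite /Mps /in_nbrs_plus setU11; apply: lw_ge.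
  + move=> t _ i' l li El; rewrite /Mps /in_nbrs_plus /in_nbrs !inE li El orbT.
    exact: lw_ge.
  + by rewrite reach_full // inE.
Qed.

Definition deltaS : R := n%:R^-1 ^+ L.

Lemma v_lb t i : (1 <= t)%N -> deltaS <= ps_v R E t i.
Proof.
move=> t1; case: (leqP t L) => tL.
  apply: le_trans (v_lb_small i t1).
  apply: ler_wiXn2l; [exact: ninv_ge0 | exact: ninv_le1 | ].
  by apply: leq_trans tL; apply: leq_pred.
have -> : t = ((t - L) + L)%N by rewrite subnK // ltnW.
by apply: v_lb_big; rewrite subn_gt0.
Qed.


Definition epsS : R := n%:R^-1 * deltaS / n%:R.
Definition etaS : R := epsS ^+ L.

Lemma Smx_E t i j : (1 <= t)%N ->
  Smx R E t i j = Mps t i j * ps_v R E t j / ps_v R E t.+1 i.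
Proof.
move=> t1; rewrite mxE /Mps; case: ifP => jN; last by rewrite !mul0r.
by rewrite sum_plus -ps_vS.
Qed.

Lemma S_ge0 t i j : (1 <= t)%N -> 0 <= Smx R E t i j.
Proof.
move=> t1; rewrite Smx_E //; apply: divr_ge0; last by apply: ltW; apply: v_pos; apply: leqW.
by apply: mulr_ge0; [apply: Mps_ge0 | apply: ltW (v_pos _ t1)].
Qed.

Lemma S_row t i : (1 <= t)%N -> \sum_j Smx R E t i j = 1.
Proof.
move=> t1; rewrite (eq_bigr (fun j => Mps t i j * ps_v R E t j / ps_v R E t.+1 i)); last first.
  by move=> j _; rewrite Smx_E.
by rewrite -mulr_suml -ps_vS_M // mulfV // gt_eqF // v_pos.
Qed.

Lemma delta_ge0 : 0 <= deltaS.
Proof. by apply: exprn_ge0; apply: ninv_ge0. Qed.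

Lemma delta_le1 : deltaS <= 1.
Proof. by apply: exprn_ile1; [apply: ninv_ge0 | apply: ninv_le1]. Qed.

Lemma S_lb t i j : (1 <= t)%N -> j \in in_nbrs_plus E t i -> epsS <= Smx R E t i j.
Proof.
move=> t1 jN; rewrite Smx_E // /Mps jN /epsS.
apply: ler_pM.
- by apply: mulr_ge0; [apply: ninv_ge0 | apply: delta_ge0].
- exact: ninv_ge0.
- apply: ler_pM; [apply: ninv_ge0 | apply: delta_ge0 | apply: lw_ge | apply: v_lb].
  exact: t1.
- rewrite lef_pV2 ?posrE ?ltr0n //; first exact: v_le.
  exact: v_pos.
Qed.

Lemma n_gt0R : 0 < n%:R :> R.
Proof. by rewrite ltr0n. Qed.

Lemma epsS_gt0 : 0 < epsS.
Proof.
rewrite /epsS; apply: mulr_gt0; last by rewrite invr_gt0 n_gt0R.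
apply: mulr_gt0; first by rewrite invr_gt0 n_gt0R.
by apply: exprn_gt0; rewrite invr_gt0 n_gt0R.
Qed.

Lemma epsS_le : epsS <= n%:R^-1.
Proof.
rewrite /epsS -[X in _ <= X]mulr1 -mulrA; apply: ler_wpM2l; first exact: ninv_ge0.
rewrite -[X in _ <= X]mulr1; apply: ler_pM => //.
- exact: delta_ge0.
- exact: ninv_ge0.
- exact: delta_le1.
- exact: ninv_le1.
Qed.

Lemma eta_gt0 : 0 < etaS.
Proof. by apply: exprn_gt0; apply: epsS_gt0. Qed.

Lemma eta_le : 2 * etaS <= 1.
Proof.
have e1 : etaS <= epsS.
  rewrite /etaS -[X in _ <= X]expr1; apply: ler_wiXn2l; last exact: L_ge1.
    exact: ltW epsS_gt0.
  exact: le_trans epsS_le ninv_le1.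
apply: le_trans (_ : 2 * n%:R^-1 <= 1).
  apply: ler_wpM2l => //; exact: le_trans e1 epsS_le.
by rewrite ler_pdivrMr ?n_gt0R // mul1r ler_nat.
Qed.

Lemma seminf_ext (x y : 'I_n -> R) : (forall i, x i = y i) -> seminf x = seminf y.
Proof.
move=> H; rewrite /seminf; congr (_ / 2).
by apply: eq_bigr => i _; apply: eq_bigr => j _; rewrite !H.
Qed.

Section Traj.
Variables (t0 : nat) (h : nat -> 'I_n -> R).
Hypothesis t1 : (1 <= t0)%N.
Hypothesis Hh : forall t, (t0 <= t)%N -> forall i, h t.+1 i = \sum_j Smx R E t i j * h t j.

Lemma traj_nonexp t s : (t0 <= t)%N -> seminf (h (t + s)) <= seminf (h t).
Proof.
move=> tt; elim: s => [|s IH]; first by rewrite addn0.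
apply: le_trans IH.
have ts : (t0 <= t + s)%N by apply: leq_trans tt (leq_addr _ _).
have ts1 : (1 <= t + s)%N by apply: leq_trans t1 ts.
rewrite addnS (seminf_ext (Hh ts)).
have := @contract R n (fun i j => Smx R E (t + s) i j) 0 (h (t + s)) n0 (lexx 0).
rewrite mulr0 subr0 mul1r; apply => //.
- by move=> i j; apply: S_ge0.
- by move=> i; apply: S_row.
- by move=> i j; apply: S_ge0.
Qed.

Lemma traj_block t : (t0 <= t)%N -> seminf (h (t + L)) <= (1 - 2 * etaS) * seminf (h t).
Proof.
move=> tt; have tt1 : (1 <= t)%N by apply: leq_trans t1 tt.
have ev := prodm_evol (A := fun t i j => Smx R E t i j) (x := h)
  (fun t' Ht' => Hh (leq_trans tt Ht')).
rewrite (seminf_ext (ev L)).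
apply: contract => //.
- exact: ltW eta_gt0.
- exact: eta_le.
- by apply: prodm_ge0 => t' Ht' i j; apply: S_ge0; apply: leq_trans tt1 Ht'.
- by apply: prodm_row => t' Ht' i; apply: S_row; apply: leq_trans tt1 Ht'.
- move=> i j; apply: (prodm_lb (E := E)).
  + exact: ltW epsS_gt0.
  + by move=> t' Ht' i' j'; apply: S_ge0; apply: leq_trans tt1 Ht'.
  + move=> t' Ht' i'; apply: S_lb; first exact: leq_trans tt1 Ht'.
    by rewrite /in_nbrs_plus setU11.
  + move=> t' Ht' i' l li El; apply: S_lb; first exact: leq_trans tt1 Ht'.
    by rewrite /in_nbrs_plus /in_nbrs !inE li El orbT.
  + by rewrite reach_full // inE.
Qed.

Lemma traj_iter q : seminf (h (t0 + q * L)) <= (1 - 2 * etaS) ^+ q * seminf (h t0).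
Proof.
elim: q => [|q IH]; first by rewrite mul0n addn0 expr0 mul1r.
have -> : (t0 + q.+1 * L = (t0 + q * L) + L)%N by rewrite mulSn; lia.
have c0 : 0 <= 1 - 2 * etaS by rewrite subr_ge0 eta_le.
apply: le_trans (traj_block (t := (t0 + q * L)%N) _) _; first exact: leq_addr.
by rewrite exprS -mulrA; apply: ler_wpM2l.
Qed.

End Traj.

End PS.




Lemma bern (R : realType) (x : R) m : 0 <= x -> x <= 1 -> 1 - m%:R * x <= (1 - x) ^+ m.
Proof.
move=> x0 x1; elim: m => [|m IH]; first by rewrite mul0r subr0 expr0.
rewrite exprSr.
have h1 : 0 <= 1 - x by rewrite subr_ge0.
apply: le_trans (_ : (1 - m%:R * x) * (1 - x) <= _); last exact: ler_wpM2r.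
have hm : 0 <= m%:R :> R by rewrite ler0n.
rewrite -natr1; nra.
Qed.

Lemma fin_arith (R : realType) (c lam : R) (L q s : nat) : 0 <= c -> c <= lam ^+ L ->
  0 < lam -> lam <= 1 -> (s <= L)%N -> c ^+ q <= (lam ^+ L)^-1 * lam ^+ (q * L + s).
Proof.
move=> c0 cl l0 l1 sL.
have H1 : c ^+ q <= (lam ^+ L) ^+ q.
  by apply: lerXn2r => //; rewrite nnegrE // exprn_ge0 // ltW.
apply: le_trans H1 _.
rewrite -exprM exprD mulrCA (mulnC L q).
rewrite -[X in X <= _]mulr1; apply: ler_wpM2l; first by rewrite exprn_ge0 // ltW.
rewrite mulrC ler_pdivlMr ?exprn_gt0 // mul1r.
by apply: ler_wiXn2l => //; exact: ltW.
Qed.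

Unset Implicit Arguments.

Theorem lemma2 (R : realType) (n : nat) (E : nat -> rel 'I_n) :
  (1 < n)%N ->
  (forall t : nat, (1 <= t)%N -> compatible_sym_stoch R (E t)) ->
  rep_jointly_sc E ->
  exists (gamma lambda : R),
    [/\ 0 < gamma, 0 <= lambda, lambda < 1 &
      forall (t0 : nat) (h : nat -> 'I_n -> R),
        (1 <= t0)%N ->
        (forall t : nat, (t0 <= t)%N ->
           forall i, h t.+1 i = \sum_j Smx R E t i j * h t j) ->
        forall t : nat, (t0 <= t)%N ->
          seminf (h t) <= gamma * lambda ^+ (t - t0) * seminf (h t0)].
Proof.
move=> n1 _ [r [Hr HE]].
have HE' : forall k x y,
  connect (fun x y : 'I_n => [exists s : 'I_r, E (r * k + s + 1)%N x y]) x y.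
  by move=> k x y; apply: HE.
set L := (r * n)%N.
have L1 : (0 < L)%N by rewrite /L muln_gt0 Hr ltnW.
have e0 := eta_gt0 R n1 r.
have e1 := eta_le R n1 Hr.
set et := etaS R n r in e0 e1 *.
have L1R : 1 <= L%:R :> R by rewrite ler1n.
have LR0 : 0 < L%:R :> R by rewrite ltr0n.
have q0 : 0 < et / L%:R by rewrite divr_gt0.
have q1 : et / L%:R <= et.
  by rewrite ler_pdivrMr // -[X in X <= _]mulr1 ler_wpM2l // ltW.
pose lam := 1 - et / L%:R.
have lam0 : 0 < lam by rewrite /lam subr_gt0; lra.
have lam1 : lam < 1 by rewrite /lam; lra.
exists ((lam ^+ L)^-1), lam; split.
- by rewrite invr_gt0 exprn_gt0.
- exact: ltW.
- exact: lam1.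
move=> t0 h t1 Hh t tt.
set d := (t - t0)%N.
have et' : t = (t0 + (d %/ L) * L + d %% L)%N.
  by have := divn_eq d L; rewrite /d; lia.
rewrite {1}et'.
apply: le_trans (traj_nonexp n1 t1 Hh _ (leq_addr _ _)) _.
apply: le_trans (traj_iter n1 Hr HE' t1 Hh _) _.
apply: ler_wpM2r; first exact: seminf_ge0 (ltnW n1).
rewrite -/d.
have F := @fin_arith R (1 - 2 * et) lam L (d %/ L) (d %% L).
rewrite -divn_eq in F; apply: F.
- by rewrite subr_ge0.
- apply: le_trans (bern L (ltW q0) (le_trans q1 _)); last lra.
  by rewrite [L%:R * _]mulrC divfK ?gt_eqF //; lra.
- exact: lam0.
- exact: ltW.
- by apply: ltnW; rewrite ltn_pmod.
Qed.
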